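(* Fix $n$, generators $x_{i_1},\dots,x_{i_k}\in\mathcal{B}_n$, an index $j$, integers $a_h$ ($h\ne j$), and set $V(e)=V_n(x_{i_1}^{a_1}\cdots x_{i_j}^{e}\cdots x_{i_k}^{a_k})$ for $e\in\mathbb{Z}$. Suppose $\deg V(e+1)\le\deg V(e)$ for some $e$. Then for all $m\ge1$, $\deg V(e+m+1)>1+\deg V(e+m)$, and for all $m\ge2$, $\deg V(e+m)=\deg V(e)+3m-2$ and $V(e+m)$ has the same leading coefficient as $V(e)$.
   Context: $\mathcal{B}_n$ is the Artin braid group with generators $x_1,\dots,x_{n-1}$; $V_n(\beta)$ is the Jones polynomial of the closure of $\beta$, normalized by $V(\text{unknot})=1$, $q^{-1}V_{L_+}-qV_{L_-}=(q^{1/2}-q^{-1/2})V_{L_0}$, as a Laurent polynomial in $s=q^{-1/2}$. Conventions: closures of $\alpha x_i^{e+2}\gamma$, $\alpha x_i^{e+1}\gamma$, $\alpha x_i^{e}\gamma$ play the roles of $L_-,L_0,L_+$ (e.g. the closure of $x_1^2\in\mathcal B_2$ has Jones polynomial $-s-s^5$). For a nonzero Laurent polynomial, $\deg$ is its highest exponent and the leading coefficient is the coefficient of that term. *)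

(* Defs.v *)
(* Jones polynomial of braid closures, computed by the
   Kauffman-bracket / Temperley-Lieb state sum, written directly in the
   variable s = q^{-1/2} (= A^2 in Kauffman's notation). *)
From mathcomp Require Import all_boot all_order all_algebra.
Set Implicit Arguments. Unset Strict Implicit. Unset Printing Implicit Defensive.
Import Order.TTheory GRing.Theory Num.Theory.
Local Open Scope ring_scope.

(* A Laurent polynomial is represented by a (not necessarily reduced) list
   of monomials (exponent, coefficient); its value is the sum of them. *)
Definition laurent := seq (int * int).

Definition lcoef (p : laurent) (k : int) : int :=
  foldr (fun m acc => if m.1 == k then m.2 + acc else acc) 0 p.

Definition lone : laurent := [:: (0, 1)].
Definition ladd (p q : laurent) : laurent := p ++ q.
Definition lmul (p q : laurent) : laurent :=
  [seq (a.1 + b.1, a.2 * b.2) | a <- p, b <- q].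
Definition lpow (p : laurent) (m : nat) : laurent := iter m (lmul p) lone.
Definition lsum (ps : seq laurent) : laurent := flatten ps.

Definition lsupport (p : laurent) : seq int :=
  [seq k <- undup (map fst p) | lcoef p k != 0].

(* degree = highest exponent with nonzero coefficient (0 for the zero
   polynomial, a case that never occurs for Jones polynomials) *)
Definition ldeg (p : laurent) : int :=
  match lsupport p with
  | [::] => 0
  | k :: ks => foldr Num.max k ks
  end.

Definition llead (p : laurent) : int := lcoef p (ldeg p).

(* A letter (i, true) is the generator x_i, (i, false) is x_i^{-1};
   x_i (1 <= i <= n-1) acts on strand positions i-1 and i (0-based). *)
Definition letter := (nat * bool)%type.

Definition gen_pow (i : nat) (a : int) : seq letter :=
  match a with
  | Posz m => nseq m (i, true)
  | Negz m => nseq m.+1 (i, false)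
  end.

Definition braid_word (w : seq (nat * int)) : seq letter :=
  flatten [seq gen_pow p.1 p.2 | p <- w].

Definition merge_edge (lab : seq nat) (uv : nat * nat) : seq nat :=
  let a := nth 0%N lab uv.1 in
  let b := nth 0%N lab uv.2 in
  [seq (if x == b then a else x) | x <- lab].

Definition ncomponents (N : nat) (E : seq (nat * nat)) : nat :=
  size (undup (foldl merge_edge (iota 0 N) E)).

(* vertex (t, p), level t in 0..c, position p in 0..n-1, coded as t*n+p.
   At level t, letter on positions i-1,i is smoothed either by the identity
   (b = false) or by the cup-cap e_i (b = true). *)
Definition vtx (n t p : nat) : nat := (t * n + p)%N.

Definition level_edges (n t i : nat) (b : bool) : seq (nat * nat) :=
  [seq (vtx n t p, vtx n t.+1 p) | p <- iota 0 n & (p != i.-1) && (p != i)] ++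
  (if b then [:: (vtx n t i.-1, vtx n t i); (vtx n t.+1 i.-1, vtx n t.+1 i)]
   else [:: (vtx n t i.-1, vtx n t.+1 i.-1); (vtx n t i, vtx n t.+1 i)]).

Definition closure_edges (n c : nat) : seq (nat * nat) :=
  [seq (vtx n c p, vtx n 0 p) | p <- iota 0 n].

Definition state_loops (n : nat) (w : seq letter) (st : seq bool) : nat :=
  let c := size w in
  ncomponents (c.+1 * n)
    (flatten [seq level_edges n t (nth (0%N, true) w t).1 (nth false st t)
             | t <- iota 0 c] ++ closure_edges n c).

Fixpoint all_states (c : nat) : seq (seq bool) :=
  match c with
  | 0 => [:: [::]]
  | c'.+1 => [seq b :: s | b <- [:: false; true], s <- all_states c']
  end.

Definition ldelta : laurent := [:: (1, -1); (-1, -1)].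

(* weight of a letter with sign eps under a smoothing:
   combining A^{+-1} bracket weights with the writhe factor (-A^3)^{-w}
   and A^2 = s:  x_i : id -> -s, e -> -s^2 ;  x_i^-1 : id -> -s^-1, e -> -s^-2 *)
Definition letter_weight (l : letter) (b : bool) : laurent :=
  let eps : int := if l.2 then 1 else -1 in
  if b then [:: (eps *+ 2, -1)] else [:: (eps, -1)].

Definition state_weight (w : seq letter) (st : seq bool) : laurent :=
  foldr lmul lone [seq letter_weight lb.1 lb.2 | lb <- zip w st].

(* V_n(beta): Jones polynomial of the closure of beta in B_n, normalized by
   V(unknot) = 1 and q^{-1} V_+ - q V_- = (q^{1/2}-q^{-1/2}) V_0, with
   s = q^{-1/2}; the generator x_i is the crossing for which closures of
   a x_i^{e+2} g, a x_i^{e+1} g, a x_i^e g play L_-, L_0, L_+. *)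
Definition jones (n : nat) (w : seq (nat * int)) : laurent :=
  let bw := braid_word w in
  lsum [seq lmul (state_weight bw st) (lpow ldelta (state_loops n bw st).-1)
       | st <- all_states (size bw)].

(* Main.v *)
Require Import Defs.
From mathcomp Require Import all_boot all_order all_algebra.
From mathcomp Require Import zify ring lra.
Import Order.TTheory GRing.Theory Num.Theory.

Module PartA.
Set Implicit Arguments. Unset Strict Implicit. Unset Printing Implicit Defensive.

Inductive conn (E : seq (nat * nat)) : nat -> nat -> Prop :=
| conn_refl x : conn E x x
| conn_fwd x y z : (x, y) \in E -> conn E y z -> conn E x z
| conn_bwd x y z : (y, x) \in E -> conn E y z -> conn E x z.

Lemma conn_trans E x y z : conn E x y -> conn E y z -> conn E x z.
Proof.
move=> C; elim: C z => [//|a b c H _ IH|a b c H _ IH] z Hz.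
- exact: conn_fwd H (IH _ Hz).
- exact: conn_bwd H (IH _ Hz).
Qed.

Lemma conn_e E x y : (x, y) \in E -> conn E x y.
Proof. move=> H; exact: conn_fwd H (conn_refl _ _). Qed.

Lemma conn_sym E x y : conn E x y -> conn E y x.
Proof.
elim=> [a|a b c H _ IH|a b c H _ IH]; first exact: conn_refl.
- apply: conn_trans IH _; exact: conn_bwd H (conn_refl _ _).
- apply: conn_trans IH _; exact: conn_e.
Qed.

Lemma conn_e' E x y : (y, x) \in E -> conn E x y.
Proof. by move=> H; apply/conn_sym/conn_e. Qed.

Lemma conn_sub E E' x y : {subset E <= E'} -> conn E x y -> conn E' x y.
Proof.
move=> S; elim=> [a|a b c H _ IH|a b c H _ IH]; first exact: conn_refl.
- exact: conn_fwd (S _ H) IH.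
- exact: conn_bwd (S _ H) IH.
Qed.

Lemma conn_map E E' (f : nat -> nat) :
  (forall u v, (u, v) \in E -> conn E' (f u) (f v)) ->
  forall x y, conn E x y -> conn E' (f x) (f y).
Proof.
move=> Hf x y; elim=> [a|a b c H _ IH|a b c H _ IH]; first exact: conn_refl.
- exact: conn_trans (Hf _ _ H) IH.
- exact: conn_trans (conn_sym (Hf _ _ H)) IH.
Qed.

Definition inv_lab N (E : seq (nat * nat)) (lab : seq nat) :=
  size lab = N /\
  forall x y, (x < N)%N -> (y < N)%N -> (nth 0%N lab x == nth 0%N lab y) <-> conn E x y.

Lemma inv_lab_step N E lab u v :
  (forall e, e \in E -> (e.1 < N)%N /\ (e.2 < N)%N) ->
  (u < N)%N -> (v < N)%N -> inv_lab N E lab -> inv_lab N (E ++ [:: (u, v)]) (merge_edge lab (u, v)).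
Proof.
move=> HE Hu Hv [Hs Hc]; rewrite /merge_edge /=; split; first by rewrite size_map.
have sub : {subset E <= E ++ [:: (u, v)]} by move=> z Hz; rewrite mem_cat Hz.
have euv : conn (E ++ [:: (u, v)]) u v by apply: conn_e; rewrite mem_cat mem_seq1 eqxx orbT.
move=> x y Hx Hy; rewrite !(nth_map 0%N) ?Hs //; split.
- case: ifP => /eqP ex; case: ifP => /eqP ey.
  + move=> _; apply: (conn_sub sub).
    have C1 : conn E x v by apply/(Hc _ _ Hx Hv); apply/eqP.
    have C2 : conn E y v by apply/(Hc _ _ Hy Hv); apply/eqP.
    exact: conn_trans C1 (conn_sym C2).
  + move=> /eqP exy.
    have Cuy : conn E u y by apply/(Hc _ _ Hu Hy); apply/eqP.
    have Cxv : conn E x v by apply/(Hc _ _ Hx Hv); apply/eqP.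
    apply: conn_trans (conn_sub sub Cxv) _.
    apply: conn_trans (conn_sym euv) (conn_sub sub Cuy).
  + move=> /eqP exy.
    have Cxu : conn E x u by apply/(Hc _ _ Hx Hu); apply/eqP.
    have Cyv : conn E y v by apply/(Hc _ _ Hy Hv); apply/eqP.
    apply: conn_trans (conn_sub sub Cxu) _.
    apply: conn_trans euv (conn_sym (conn_sub sub Cyv)).
  + move=> /eqP exy. by apply: (conn_sub sub); apply/(Hc _ _ Hx Hy); apply/eqP.
- pose f := fun z : nat => if z == nth 0%N lab v then nth 0%N lab u else z.
  have H : forall a b, conn (E ++ [:: (u, v)]) a b ->
      f (nth 0%N lab a) = f (nth 0%N lab b).
  { have He : forall a b, (a, b) \in E ++ [:: (u, v)] -> f (nth 0%N lab a) = f (nth 0%N lab b).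
    { move=> a b; rewrite mem_cat mem_seq1 => /orP [Hab|/eqP [-> ->]].
      - have [Ha Hb] := HE _ Hab.
        have /(Hc _ _ Ha Hb) /eqP -> := conn_e Hab. done.
      - by rewrite /f eqxx; case: ifP. }
    move=> a b; elim=> [c|c d g Hcd _ IH|c d g Hcd _ IH] //.
    - by rewrite (He _ _ Hcd).
    - by rewrite -(He _ _ Hcd). }
  by move=> /H; rewrite /f => ->.
Qed.

Lemma inv_lab_fold N E1 E2 lab :
  (forall e, e \in E1 ++ E2 -> (e.1 < N)%N /\ (e.2 < N)%N) ->
  inv_lab N E1 lab -> inv_lab N (E1 ++ E2) (foldl merge_edge lab E2).
Proof.
elim: E2 E1 lab => [|[u v] E2 IH] E1 lab HE Hi /=; first by rewrite cats0.
have Huv : (u < N)%N /\ (v < N)%N.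
  by apply: (HE (u, v)); rewrite mem_cat in_cons eqxx orbT.
rewrite -cat1s catA; apply: IH; first by rewrite -catA.
apply: inv_lab_step => //; first by move=> e He; apply: HE; rewrite mem_cat He.
  by case: Huv. by case: Huv.
Qed.

Lemma conn_nil x y : conn [::] x y -> x = y.
Proof. by elim=> [//|a b c H|a b c H]. Qed.

Lemma inv_lab_ncomp N E :
  (forall e, e \in E -> (e.1 < N)%N /\ (e.2 < N)%N) ->
  inv_lab N E (foldl merge_edge (iota 0 N) E).
Proof.
move=> HE; apply: (@inv_lab_fold N [::] E) => //; split; first by rewrite size_iota.
move=> x y Hx Hy; rewrite !nth_iota // !add0n; split; first by move=> /eqP ->; exact: conn_refl.
by move=> /conn_nil ->.
Qed.

Lemma undup_size_equiv (T1 T2 : eqType) (f : nat -> T1) (g : nat -> T2) (s : seq nat) :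
  {in s &, forall x y, (f x == f y) = (g x == g y)} ->
  size (undup (map f s)) = size (undup (map g s)).
Proof.
elim: s => [//|x s IH] H /=.
have H' : {in s &, forall x y, (f x == f y) = (g x == g y)}.
  by move=> a b Ha Hb; apply: H; rewrite in_cons ?Ha ?Hb orbT.
have E : (f x \in map f s) = (g x \in map g s).
  apply/mapP/mapP => [[y Hy /eqP]|[y Hy /eqP]]; exists y => //; apply/eqP.
  - by rewrite -H ?in_cons ?eqxx ?Hy ?orbT.
  - by rewrite H ?in_cons ?eqxx ?Hy ?orbT.
by rewrite E; case: ifP => _ /=; rewrite IH.
Qed.

Definition edges_in N (E : seq (nat * nat)) :=
  forall e, e \in E -> (e.1 < N)%N /\ (e.2 < N)%N.

Lemma ncomp_classes N E (T : eqType) (g : nat -> T) :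
  edges_in N E ->
  (forall x y, (x < N)%N -> (y < N)%N -> (g x == g y) <-> conn E x y) ->
  ncomponents N E = size (undup (map g (iota 0 N))).
Proof.
move=> HE Hg; have [Hs Hc] := inv_lab_ncomp HE.
rewrite /ncomponents.
set lab := foldl _ _ _ in Hs Hc *.
have -> : lab = map (nth 0%N lab) (iota 0 N).
  by rewrite -Hs -/(mkseq _ _) mkseq_nth.
apply: undup_size_equiv => x y; rewrite !mem_iota !add0n => Hx Hy.
apply/idP/idP => H1.
- by apply/(Hg _ _ Hx Hy); apply/(Hc _ _ Hx Hy).
- by apply/(Hc _ _ Hx Hy); apply/(Hg _ _ Hx Hy).
Qed.

Lemma ncomp_morph N E M E' (phi psi : nat -> nat) :
  edges_in N E -> edges_in M E' ->
  (forall x, (x < N)%N -> (phi x < M)%N) -> (forall y, (y < M)%N -> (psi y < N)%N) ->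
  (forall u v, (u, v) \in E -> conn E' (phi u) (phi v)) ->
  (forall u v, (u, v) \in E' -> conn E (psi u) (psi v)) ->
  (forall x, (x < N)%N -> conn E x (psi (phi x))) ->
  (forall y, (y < M)%N -> conn E' y (phi (psi y))) ->
  ncomponents N E = ncomponents M E'.
Proof.
move=> HE HE' Hphi Hpsi Ephi Epsi Hx0 Hy0.
have [Hs' Hc'] := inv_lab_ncomp HE'.
set lab' := foldl _ _ _ in Hs' Hc'.
rewrite (@ncomp_classes N E _ (fun x => nth 0%N lab' (phi x))) //; last first.
  move=> x y Hx Hy; split.
  - move=> /(Hc' _ _ (Hphi _ Hx) (Hphi _ Hy)) C.
    have C2 := conn_map (f:=psi) Epsi C.
    exact: conn_trans (Hx0 _ Hx) (conn_trans C2 (conn_sym (Hx0 _ Hy))).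
  - by move=> C; apply/(Hc' _ _ (Hphi _ Hx) (Hphi _ Hy)); exact: (conn_map (f:=phi) Ephi C).
rewrite (@ncomp_classes M E' _ (nth 0%N lab')) //.
apply: perm_size; apply: uniq_perm; rewrite ?undup_uniq // => z.
rewrite !mem_undup; apply/mapP/mapP => [[x Hx ->]|[y Hy ->]].
- by exists (phi x) => //; move: Hx; rewrite !mem_iota !add0n /= => /Hphi.
- move: Hy; rewrite mem_iota add0n /= => Hy; exists (psi y).
    by rewrite mem_iota add0n /= Hpsi.
  apply/eqP; apply/(Hc' _ _ Hy (Hphi _ (Hpsi _ Hy))); exact: Hy0.
Qed.

Lemma conn_range M E a b : edges_in M E -> conn E a b -> a = b \/ ((a < M)%N /\ (b < M)%N).
Proof.
move=> HE; elim=> [c|c d g Hcd _ IH|c d g Hcd _ IH]; first by left.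
- have [H1 H2] := HE _ Hcd; case: IH => [<-|[H3 H4]]; by right.
- have [H1 H2] := HE _ Hcd; case: IH => [<-|[H3 H4]]; by right.
Qed.

Lemma size_undup_rcons (T : eqType) (s : seq T) z :
  size (undup (s ++ [:: z])) = (size (undup s) + (z \notin s))%N.
Proof.
elim: s => [//|x s IH] /=; rewrite mem_cat mem_seq1 in_cons.
have [->|nxz] := eqVneq x z.
  - rewrite orbT /= IH; by case: (z \in s); rewrite /= ?addn0 ?addn1.
- rewrite orbF /=; case: (x \in s) => /=; rewrite IH //; by rewrite addSn.
Qed.

Lemma ncomp_isolated M E : edges_in M E -> ncomponents M.+1 E = (ncomponents M E).+1.
Proof.
move=> HE.
have HE1 : edges_in M.+1 E by move=> e /HE [H1 H2]; split; apply: ltnW.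
have [Hs Hc] := inv_lab_ncomp HE.
set lab := foldl _ _ _ in Hs Hc.
pose g := fun x => if (x < M)%N then Some (nth 0%N lab x) else None.
rewrite (@ncomp_classes M.+1 E _ g) //; last first.
  move=> x y Hx Hy; rewrite /g; case: ifP => Hx'; case: ifP => Hy'.
  - split; first by move=> /eqP [/eqP] /(Hc _ _ Hx' Hy').
    by move=> /(Hc _ _ Hx' Hy') /eqP ->.
  - split => // C; case: (conn_range HE C) => [Exy|[_ H]]; last by rewrite H in Hy'.
    by move: Hy'; rewrite -Exy Hx'.
  - split => // C; case: (conn_range HE C) => [Exy|[H _]]; last by rewrite H in Hx'.
    by move: Hx'; rewrite Exy Hy'.
  - split => // _; have -> : x = M by apply/eqP; rewrite eqn_leq -ltnS Hx leqNgt Hx'.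
    have -> : y = M by apply/eqP; rewrite eqn_leq -ltnS Hy leqNgt Hy'.
    exact: conn_refl.
rewrite (@ncomp_classes M E _ (nth 0%N lab)) //.
rewrite -addn1 iotaD map_cat add0n /= size_undup_rcons.
have -> : g M = None by rewrite /g ltnn.
have -> : None \notin map g (iota 0 M).
  by apply/mapP => [[x]]; rewrite mem_iota add0n /= /g => ->.
rewrite addn1; congr (_.+1); apply: undup_size_equiv => x y.
rewrite !mem_iota !add0n /= /g => -> ->. done.
Qed.

End PartA.
Import PartA.

Module PartB.
Set Implicit Arguments. Unset Strict Implicit. Unset Printing Implicit Defensive.

Definition EL n c (pos : nat -> nat) (b : nat -> bool) :=
  flatten [seq level_edges n t (pos t) (b t) | t <- iota 0 c] ++ closure_edges n c.

Lemma state_loopsE n w st :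
  state_loops n w st = ncomponents ((size w).+1 * n)
     (EL n (size w) (fun t => (nth (0%N, true) w t).1) (nth false st)).
Proof. by []. Qed.

Definition straight (pos : nat -> nat) (b : nat -> bool) t p :=
  ((p != (pos t).-1) && (p != pos t)) || ~~ b t.

Lemma EL_ind n c pos b (P : nat -> nat -> Prop) :
  (forall t, (t < c)%N -> (0 < pos t < n)%N) ->
  (forall t p, (t < c)%N -> (p < n)%N -> straight pos b t p ->
      P (vtx n t p) (vtx n t.+1 p)) ->
  (forall t, (t < c)%N -> b t ->
      P (vtx n t (pos t).-1) (vtx n t (pos t)) /\ P (vtx n t.+1 (pos t).-1) (vtx n t.+1 (pos t))) ->
  (forall p, (p < n)%N -> P (vtx n c p) (vtx n 0 p)) ->
  forall u v, (u, v) \in EL n c pos b -> P u v.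
Proof.
move=> Hpos HS HC HCl u v; rewrite mem_cat => /orP [].
- move=> /flattenP [l /mapP [t Ht ->]]; move: Ht; rewrite mem_iota add0n /= => Ht.
  have /andP [H0 Hn] := Hpos _ Ht.
  rewrite /level_edges mem_cat => /orP [].
  + move=> /mapP [p]; rewrite mem_filter mem_iota add0n /= => /andP [Hp Hpn] [-> ->].
    by apply: HS => //; rewrite /straight Hp.
  + case Hb: (b t); rewrite !in_cons in_nil orbF => /orP [] /eqP [-> ->].
    * by case: (HC t Ht Hb).
    * by case: (HC t Ht Hb).
    * apply: HS => //; [lia | by rewrite /straight Hb orbT].
    * apply: HS => //; by rewrite /straight Hb orbT.
- by move=> /mapP [p]; rewrite mem_iota add0n /= => Hp [-> ->]; apply: HCl.
Qed.

Lemma EL_S n c pos (b : nat -> bool) t p : (t < c)%N -> (p < n)%N -> straight pos b t p ->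
  (vtx n t p, vtx n t.+1 p) \in EL n c pos b.
Proof.
move=> Ht Hp; rewrite /straight mem_cat => Hs; apply/orP; left.
apply/flattenP; exists (level_edges n t (pos t) (b t)).
  by apply/mapP; exists t => //; rewrite mem_iota add0n.
rewrite /level_edges mem_cat.
case Hsp: ((p != (pos t).-1) && (p != pos t)).
- by apply/orP; left; apply/mapP; exists p => //; rewrite mem_filter Hsp mem_iota.
- move: Hs; rewrite Hsp /= => Hb; apply/orP; right; rewrite (negbTE Hb) !in_cons in_nil orbF.
  move/negbT: Hsp; rewrite negb_and !negbK => /orP [] /eqP ->; by rewrite eqxx ?orbT.
Qed.

Lemma EL_C n c pos (b : nat -> bool) t : (t < c)%N -> b t ->
  (vtx n t (pos t).-1, vtx n t (pos t)) \in EL n c pos b /\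
  (vtx n t.+1 (pos t).-1, vtx n t.+1 (pos t)) \in EL n c pos b.
Proof.
move=> Ht Hb; split; rewrite mem_cat; apply/orP; left;
apply/flattenP; exists (level_edges n t (pos t) (b t));
  try (by apply/mapP; exists t => //; rewrite mem_iota add0n);
rewrite /level_edges mem_cat Hb !in_cons eqxx ?orbT //.
Qed.

Lemma EL_Cl n c pos (b : nat -> bool) p : (p < n)%N -> (vtx n c p, vtx n 0 p) \in EL n c pos b.
Proof.
move=> Hp; rewrite mem_cat; apply/orP; right; apply/mapP; exists p => //.
by rewrite mem_iota.
Qed.

Lemma vtx_lt n t p T : (p < n)%N -> (vtx n t p < T * n)%N = (t < T)%N.
Proof.
move=> Hp; rewrite /vtx; apply/idP/idP => H.
- rewrite ltnNge; apply/negP => HT.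
  have : (T * n <= t * n)%N by apply: leq_mul.
  lia.
- have : (t.+1 * n <= T * n)%N by apply: leq_mul.
  rewrite mulSn; lia.
Qed.

Lemma vtx_ge n t p T : (p < n)%N -> (T * n <= vtx n t p)%N = (T <= t)%N.
Proof. by move=> Hp; rewrite leqNgt vtx_lt // -leqNgt. Qed.

Lemma vtxS n t p : vtx n t.+1 p = (vtx n t p + n)%N.
Proof. rewrite /vtx mulSn; lia. Qed.

Lemma vtx_bound n t p c : (t <= c)%N -> (p < n)%N -> (vtx n t p < c.+1 * n)%N.
Proof. by move=> Ht Hp; rewrite vtx_lt. Qed.

Lemma vtx_decomp n x : (0 < n)%N -> x = vtx n (x %/ n) (x %% n).
Proof. by move=> Hn; rewrite /vtx -divn_eq. Qed.

Lemma EL_in n c pos b :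
  (forall t, (t < c)%N -> (0 < pos t < n)%N) -> edges_in (c.+1 * n) (EL n c pos b).
Proof.
move=> Hpos [u v] H; have : (0 < n)%N.
  (* from the closure edges we need n > 0 only if an edge exists *)
  move: H; apply: (@EL_ind n c pos b (fun _ _ => (0 < n)%N)) => //.
  - by move=> t p _ Hp _; lia.
  - by move=> t Ht _; have := Hpos _ Ht; lia.
  - by move=> p Hp; lia.
move=> Hn; move: H; apply: (@EL_ind n c pos b (fun u v => (u < c.+1 * n)%N /\ (v < c.+1 * n)%N)) => //.
- by move=> t p Ht Hp _; split; apply: vtx_bound => //; lia.
- move=> t Ht _; have := Hpos _ Ht => Hi; (split; split); apply: vtx_bound => //; lia.
- by move=> p Hp; split; apply: vtx_bound => //; lia.
Qed.

End PartB.
Import PartB.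

Module PartC.
Set Implicit Arguments. Unset Strict Implicit. Unset Printing Implicit Defensive.

Lemma vtx_ex n c x : (x < c.+1 * n)%N -> exists t p, [/\ (t <= c)%N, (p < n)%N & x = vtx n t p].
Proof.
move=> Hx; have Hn : (0 < n)%N by case: n Hx => [|//]; rewrite muln0.
exists (x %/ n), (x %% n); split; last exact: vtx_decomp.
- by rewrite -ltnS -(@vtx_lt n _ (x %% n)) ?ltn_pmod // -vtx_decomp.
- by rewrite ltn_pmod.
Qed.

Section R1.
Variables (n c t0 : nat) (pos pos' : nat -> nat) (b b' : nat -> bool).
Hypothesis Hpos : forall t, (t < c.+1)%N -> (0 < pos t < n)%N.
Hypothesis Ht0 : (t0 < c.+1)%N.
Hypothesis Hb0 : b t0 = false.
Hypothesis Hpos' : forall t, (t < c)%N -> pos' t = pos (if (t < t0)%N then t else t.+1).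
Hypothesis Hb' : forall t, (t < c)%N -> b' t = b (if (t < t0)%N then t else t.+1).

Let phi x := if (x < t0.+1 * n)%N then x else (x - n)%N.
Let psi y := if (y < t0.+1 * n)%N then y else (y + n)%N.

Let phi_vtx t p : (p < n)%N -> phi (vtx n t p) = if (t <= t0)%N then vtx n t p else vtx n t.-1 p.
Proof.
move=> Hp; rewrite /phi vtx_lt // ltnS; case: ifP => // /negbT; rewrite -ltnNge.
by case: t => // t _; rewrite vtxS addnK.
Qed.

Let psi_vtx t p : (p < n)%N -> psi (vtx n t p) = if (t <= t0)%N then vtx n t p else vtx n t.+1 p.
Proof. by move=> Hp; rewrite /psi vtx_lt // ltnS; case: ifP => //; rewrite vtxS. Qed.

Let Hpos'' : forall t, (t < c)%N -> (0 < pos' t < n)%N.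
Proof. move=> t Ht; rewrite Hpos' //; apply: Hpos; case: ifP; lia. Qed.

Lemma remove_id :
  ncomponents (c.+2 * n) (EL n c.+1 pos b) = ncomponents (c.+1 * n) (EL n c pos' b').
Proof.
apply: (@ncomp_morph _ _ _ _ phi psi).
- exact: EL_in.
- exact: EL_in.
- move=> x /vtx_ex [t [p [Ht Hp ->]]]; rewrite phi_vtx //.
  case: ifP => H; apply: vtx_bound => //; lia.
- move=> y /vtx_ex [t [p [Ht Hp ->]]]; rewrite psi_vtx //.
  case: ifP => H; apply: vtx_bound => //; lia.
- apply: EL_ind => //.
  + move=> t p Ht Hp Hs; rewrite !phi_vtx //.
    case: (ltngtP t t0) => H.
    * apply: conn_e; apply: EL_S => //; try lia.
      by rewrite /straight Hpos' ?Hb' ?H //; lia.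
    * case: t Ht Hp Hs H => [//|t] Ht Hp Hs H /=.
      apply: conn_e; apply: EL_S => //; try lia.
      rewrite /straight Hpos' ?Hb' //; try lia.
      by have -> : (t < t0)%N = false by lia.
    * by apply: conn_refl.
  + move=> t Ht Hbt; rewrite !phi_vtx; try (have := Hpos Ht; lia).
    case: (ltngtP t t0) => H.
    * have [H1 H2] := @EL_C n c pos' b' t ltac:(lia) ltac:(rewrite Hb' ?H //; lia).
      by rewrite Hpos' ?H in H1 H2; try lia; split; apply: conn_e.
    * case: t Ht Hbt H => [//|t] Ht Hbt H /=.
      have Ht' : (t < t0)%N = false by lia.
      have [H1 H2] := @EL_C n c pos' b' t ltac:(lia) ltac:(rewrite Hb' ?Ht' //; lia).
      by rewrite Hpos' ?Ht' in H1 H2; try lia; split; apply: conn_e.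
    * by rewrite H Hb0 in Hbt.
  + move=> p Hp; rewrite !phi_vtx // leq0n.
    have -> : (c.+1 <= t0)%N = false by lia.
    by apply: conn_e; apply: EL_Cl.
- apply: EL_ind => //.
  + move=> t p Ht Hp Hs; rewrite !psi_vtx //.
    case: (ltngtP t t0) => H.
    * apply: conn_e; apply: EL_S => //; try lia.
      by move: Hs; rewrite /straight Hpos' ?Hb' ?H //; lia.
    * apply: conn_e; apply: EL_S => //; try lia.
      move: Hs; rewrite /straight Hpos' ?Hb' //; try lia.
      by have -> : (t < t0)%N = false by lia.
    * subst t.
      apply: (@conn_fwd _ _ (vtx n t0.+1 p)).
        by apply: EL_S => //; rewrite /straight Hb0 orbT.
      apply: conn_e; apply: EL_S => //; try lia.
      by move: Hs; rewrite /straight Hpos' ?Hb' ?ltnn.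
  + move=> t Ht Hbt; have Hi := Hpos'' Ht; rewrite !psi_vtx; try lia.
    case: (ltngtP t t0) => H.
    * have [H1 H2] := @EL_C n c.+1 pos b t ltac:(lia) ltac:(by rewrite Hb' ?H in Hbt).
      by rewrite Hpos' ?H; try lia; split; apply: conn_e.
    * have Ht' : (t < t0)%N = false by lia.
      have [H1 H2] := @EL_C n c.+1 pos b t.+1 ltac:(lia) ltac:(by rewrite Hb' ?Ht' in Hbt).
      by rewrite Hpos' ?Ht'; try lia; split; apply: conn_e.
    * subst t.
      have Hb1 : b t0.+1 by rewrite Hb' ?ltnn in Hbt.
      have [H1 H2] := @EL_C n c.+1 pos b t0.+1 ltac:(lia) Hb1.
      rewrite Hpos' ?ltnn //; split; last exact: conn_e.
      have Hq : (0 < pos t0.+1 < n)%N by apply: Hpos; lia.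
      apply: (@conn_fwd _ _ (vtx n t0.+1 (pos t0.+1).-1)).
        apply: EL_S; rewrite ?/straight ?Hb0 ?orbT //; lia.
      apply: (@conn_fwd _ _ (vtx n t0.+1 (pos t0.+1))) => //.
      apply: conn_e'; apply: EL_S; rewrite ?/straight ?Hb0 ?orbT //; lia.
  + move=> p Hp; rewrite !psi_vtx // leq0n.
    case: ifP => H.
    * have Ec : c = t0 by lia.
      apply: (@conn_fwd _ _ (vtx n c.+1 p)); last by apply: conn_e; apply: EL_Cl.
      by apply: EL_S => //; rewrite /straight Ec Hb0 orbT.
    * by apply: conn_e; apply: EL_Cl.
- move=> x /vtx_ex [t [p [Ht Hp ->]]]; rewrite phi_vtx //.
  case: ifP => H; first by rewrite psi_vtx // H; apply: conn_refl.
  rewrite psi_vtx //; case: ifP => H2.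
  + have Et : t = t0.+1 by lia.
    subst t; apply: conn_e'; apply: EL_S => //; by rewrite /straight Hb0 orbT.
  + rewrite prednK; [exact: conn_refl | lia].
- move=> y /vtx_ex [t [p [Ht Hp ->]]]; rewrite psi_vtx //.
  case: ifP => H; first by rewrite phi_vtx // H; apply: conn_refl.
  rewrite phi_vtx //; have -> : (t.+1 <= t0)%N = false by lia. exact: conn_refl.
Qed.
End R1.

End PartC.
Import PartC.

Module PartD.
Set Implicit Arguments. Unset Strict Implicit. Unset Printing Implicit Defensive.

Section R2.
Variables (n c t0 : nat) (pos pos' : nat -> nat) (b b' : nat -> bool).
Hypothesis Hpos : forall t, (t < c.+2)%N -> (0 < pos t < n)%N.
Hypothesis Ht0 : (t0 < c.+1)%N.
Hypothesis Hb0 : b t0 = true.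
Hypothesis Hb1 : b t0.+1 = true.
Hypothesis Hi : pos t0.+1 = pos t0.
Hypothesis Hpos' : forall t, (t < c.+1)%N -> pos' t = pos (if (t <= t0)%N then t else t.+1).
Hypothesis Hb' : forall t, (t < c.+1)%N -> b' t = b (if (t <= t0)%N then t else t.+1).

Let i := pos t0.
Let K := (c.+2 * n)%N.
Let Hi0 : (0 < i < n)%N. Proof. by apply: Hpos; lia. Qed.
Let Hn : (0 < n)%N. Proof. lia. Qed.

Let phi x := if (x < t0.+1 * n)%N then x else
   if (x < t0.+2 * n)%N then
     (if ((x - t0.+1 * n)%N == i.-1) || ((x - t0.+1 * n)%N == i) then K else (x - n)%N)
   else (x - n)%N.
Let psi y := if (y < t0.+1 * n)%N then y else if y == K then vtx n t0.+1 i.-1 else (y + n)%N.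

Let phi_vtx t p : (p < n)%N -> phi (vtx n t p) =
  if (t <= t0)%N then vtx n t p else if t == t0.+1 then
    (if (p == i.-1) || (p == i) then K else vtx n t0 p) else vtx n t.-1 p.
Proof.
move=> Hp; rewrite /phi vtx_lt // ltnS; case: ifP => // /negbT; rewrite -ltnNge => H1.
rewrite vtx_lt //; case: (t =P t0.+1) => [->|Ht].
- by rewrite ltnSn /vtx addKn mulSn; congr (if _ then _ else _); lia.
- try (have -> : (t < t0.+2)%N = false by lia).
  by case: t H1 Ht => // t _ _; rewrite vtxS addnK.
Qed.

Let K_vtx t p : (t <= c.+1)%N -> (p < n)%N -> (vtx n t p == K) = false.
Proof. move=> Ht Hp; have := vtx_bound Ht Hp; rewrite /K; lia. Qed.

Let psi_vtx t p : (t <= c.+1)%N -> (p < n)%N ->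
  psi (vtx n t p) = if (t <= t0)%N then vtx n t p else vtx n t.+1 p.
Proof.
move=> Ht Hp; rewrite /psi vtx_lt // ltnS K_vtx //; case: ifP => //.
by rewrite vtxS.
Qed.

Let psi_K : psi K = vtx n t0.+1 i.-1.
Proof.
rewrite /psi eqxx /K; have -> : (c.+2 * n < t0.+1 * n)%N = false => //.
apply/negbTE; rewrite -leqNgt; apply: leq_mul => //; lia.
Qed.

Let Hpos'' : forall t, (t < c.+1)%N -> (0 < pos' t < n)%N.
Proof. move=> t Ht; rewrite Hpos' //; apply: Hpos; case: ifP; lia. Qed.

Let Hpos1 : pos t0.+1 = i. Proof. by rewrite Hi. Qed.

Lemma remove_EE :
  ncomponents (c.+3 * n) (EL n c.+2 pos b) = (ncomponents (c.+2 * n) (EL n c.+1 pos' b')).+1.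
Proof.
rewrite -ncomp_isolated; last exact: EL_in.
have HEK : edges_in K.+1 (EL n c.+1 pos' b').
  by move=> e /(EL_in Hpos'') [H1 H2]; split; apply: ltnW.
apply: (@ncomp_morph _ _ _ _ phi psi).
- exact: EL_in.
- exact: HEK.
- move=> x /vtx_ex [t [p [Ht Hp ->]]]; rewrite phi_vtx //.
  case: ifP => H; first by apply: leq_trans (vtx_bound (c:=c.+1) _ Hp) _; lia.
  case: ifP => H2; first case: ifP => H3 //.
  + by apply: leq_trans (vtx_bound (c:=c.+1) _ Hp) _; lia.
  + by apply: leq_trans (vtx_bound (c:=c.+1) _ Hp) _; lia.
- move=> y Hy; case: (y =P K) => [->|/eqP HyK].
  + rewrite psi_K; apply: vtx_bound; lia.
  + have : (y < c.+2 * n)%N by rewrite /K in HyK; lia.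
    move=> /vtx_ex [t [p [Ht Hp ->]]]; rewrite psi_vtx //.
    case: ifP => H; apply: vtx_bound => //; lia.
- apply: EL_ind => //.
  + move=> t p Ht Hp Hs; rewrite !phi_vtx //.
    case: (ltngtP t t0) => H.
    * try (have -> : (t.+1 <= t0)%N by lia).
      apply: conn_e; apply: EL_S => //; try lia.
      by rewrite /straight Hpos' ?Hb' ?(ltnW H) //; lia.
    * case: (t =P t0.+1) => [Et|Nt].
      - subst t; rewrite ?ltnn ?eqxx /=.
        try (have -> : (t0.+2 == t0.+1) = false by lia).
        move: Hs; rewrite /straight Hb1 orbF Hpos1 => /andP [Hp1 Hp2].
        rewrite (negbTE Hp1) (negbTE Hp2) /=.
        apply: conn_e; apply: EL_S => //; try lia.
        by rewrite /straight Hpos' ?Hb' ?leqnn // -/i Hb0 orbF Hp1 Hp2.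
      - try (have -> : (t.+1 <= t0)%N = false by lia).
        try (have -> : (t.+1 == t0.+1) = false by lia).
        case: t Ht Hp Hs H Nt => [//|t] Ht Hp Hs H Nt /=.
        apply: conn_e; apply: EL_S => //; try lia.
        rewrite /straight Hpos' ?Hb' //; try lia.
        by try (have -> : (t <= t0)%N = false by lia).
    * subst t; rewrite ?leqnn; try (have -> : (t0.+1 <= t0)%N = false by lia).
      rewrite ?eqxx; move: Hs; rewrite /straight Hb0 orbF -/i => /andP [/negbTE -> /negbTE ->] /=.
      exact: conn_refl.
  + move=> t Ht Hbt; have Hq := Hpos Ht; rewrite !phi_vtx; try lia.
    case: (ltngtP t t0) => H.
    * try (have -> : (t.+1 <= t0)%N by lia).
      have [H1 H2] := @EL_C n c.+1 pos' b' t ltac:(lia) ltac:(rewrite Hb' ?(ltnW H) //; lia).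
      by rewrite Hpos' ?(ltnW H) in H1 H2; try lia; split; apply: conn_e.
    * case: (t =P t0.+1) => [Et|Nt].
      - subst t; rewrite ?ltnn ?eqxx /= Hpos1.
        try (have -> : (t0.+2 == t0.+1) = false by lia).
        rewrite !eqxx orbT /=; split; first exact: conn_refl.
        have [H1 H2] := @EL_C n c.+1 pos' b' t0 ltac:(lia) ltac:(rewrite Hb' ?leqnn //; lia).
        by rewrite Hpos' ?leqnn in H2; try lia; apply: conn_e.
      - try (have -> : (t.+1 <= t0)%N = false by lia).
        try (have -> : (t.+1 == t0.+1) = false by lia).
        try (have -> : (t <= t0)%N = false by lia).
        try (have -> : (t == t0.+1) = false by lia).
        case: t Ht Hbt H Nt Hq => [//|t] Ht Hbt H Nt Hq /=.
        have Ht' : (t <= t0)%N = false by lia.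
        have [H1 H2] := @EL_C n c.+1 pos' b' t ltac:(lia) ltac:(rewrite Hb' ?Ht' //; lia).
        by rewrite Hpos' ?Ht' in H1 H2; try lia; split; apply: conn_e.
    * subst t; rewrite ?leqnn; try (have -> : (t0.+1 <= t0)%N = false by lia).
      rewrite ?eqxx -/i ?eqxx ?orbT /=; split; last exact: conn_refl.
      have [H1 H2] := @EL_C n c.+1 pos' b' t0 ltac:(lia) ltac:(rewrite Hb' ?leqnn //; lia).
      by rewrite Hpos' ?leqnn in H1; try lia; apply: conn_e.
  + move=> p Hp; rewrite !phi_vtx // leq0n.
    try (have -> : (c.+2 <= t0)%N = false by lia).
    try (have -> : (c.+2 == t0.+1) = false by lia).
    by apply: conn_e; apply: EL_Cl.
- apply: EL_ind => //.
  + move=> t p Ht Hp Hs; rewrite !psi_vtx //; try lia.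
    case: (ltngtP t t0) => H.
    * try (have -> : (t.+1 <= t0)%N by lia).
      apply: conn_e; apply: EL_S => //; try lia.
      by move: Hs; rewrite /straight Hpos' ?Hb' ?(ltnW H) //; lia.
    * try (have -> : (t.+1 <= t0)%N = false by lia).
      apply: conn_e; apply: EL_S => //; try lia.
      move: Hs; rewrite /straight Hpos' ?Hb' //; try lia.
      by try (have -> : (t <= t0)%N = false by lia).
    * subst t; try (have -> : (t0.+1 <= t0)%N = false by lia).
      move: Hs; rewrite /straight Hpos' ?Hb' ?leqnn // Hb0 orbF -/i => Hs.
      apply: (@conn_fwd _ _ (vtx n t0.+1 p)).
        by apply: EL_S => //; try lia; rewrite /straight -/i Hs.
      by apply: conn_e; apply: EL_S => //; try lia; rewrite /straight Hpos1 Hs.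
  + move=> t Ht Hbt; have Hq := Hpos'' Ht; rewrite !psi_vtx; try lia.
    case: (ltngtP t t0) => H.
    * try (have -> : (t.+1 <= t0)%N by lia).
      have [H1 H2] := @EL_C n c.+2 pos b t ltac:(lia) ltac:(by rewrite Hb' ?(ltnW H) in Hbt; lia).
      by rewrite Hpos' ?(ltnW H); try lia; split; apply: conn_e.
    * try (have -> : (t.+1 <= t0)%N = false by lia).
      have Ht' : (t <= t0)%N = false by lia.
      have [H1 H2] := @EL_C n c.+2 pos b t.+1 ltac:(lia) ltac:(by rewrite Hb' ?Ht' in Hbt; lia).
      by rewrite Hpos' ?Ht'; try lia; split; apply: conn_e.
    * subst t; try (have -> : (t0.+1 <= t0)%N = false by lia).
      rewrite Hpos' ?leqnn // -/i; split.
      - have [H1 H2] := @EL_C n c.+2 pos b t0 ltac:(lia) Hb0.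
        exact: conn_e.
      - have [H1 H2] := @EL_C n c.+2 pos b t0.+1 ltac:(lia) Hb1.
        by rewrite Hpos1 in H2; apply: conn_e.
  + move=> p Hp; rewrite !psi_vtx // leq0n.
    try (have -> : (c.+1 <= t0)%N = false by lia).
    by apply: conn_e; apply: EL_Cl.
- move=> x /vtx_ex [t [p [Ht Hp ->]]]; rewrite phi_vtx //.
  case: ifP => H; first by rewrite psi_vtx // ?H; [apply: conn_refl | lia].
  case: (t =P t0.+1) => [Et|Nt].
  + subst t; case: ifP => Hsp.
    * rewrite psi_K; case/orP: Hsp => /eqP ->; first exact: conn_refl.
      have [H1 H2] := @EL_C n c.+2 pos b t0 ltac:(lia) Hb0.
      exact: conn_e' H2.
    * rewrite psi_vtx ?leqnn //; try lia.
      apply: conn_e'; apply: EL_S => //; try lia.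
      by rewrite /straight -/i -negb_or Hsp.
  + rewrite psi_vtx //; try lia.
    try (have -> : (t.-1 <= t0)%N = false by lia).
    rewrite prednK; [exact: conn_refl | lia].
- move=> y Hy; case: (y =P K) => [->|/eqP HyK].
  + rewrite psi_K phi_vtx; try lia.
    try (have -> : (t0.+1 <= t0)%N = false by lia).
    by rewrite !eqxx /=; apply: conn_refl.
  + have : (y < c.+2 * n)%N by rewrite /K in HyK; lia.
    move=> /vtx_ex [t [p [Ht Hp ->]]]; rewrite psi_vtx //.
    case: ifP => H; first by rewrite phi_vtx // H; apply: conn_refl.
    rewrite phi_vtx //; try (have -> : (t.+1 <= t0)%N = false by lia).
    try (have -> : (t.+1 == t0.+1) = false by lia).
    exact: conn_refl.
Qed.
End R2.

End PartD.
Import PartD.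

Module PartE.
Set Implicit Arguments. Unset Strict Implicit. Unset Printing Implicit Defensive.
Local Open Scope ring_scope.

Lemma lcoef_cat p q k : lcoef (p ++ q) k = lcoef p k + lcoef q k.
Proof. by elim: p => [|m p IH] /=; rewrite ?add0r // IH; case: ifP => _; rewrite ?addrA. Qed.

Lemma lcoef_flatten (ps : seq laurent) k : lcoef (flatten ps) k = \sum_(p <- ps) lcoef p k.
Proof. by elim: ps => [|p ps IH]; rewrite ?big_nil ?big_cons //= lcoef_cat IH. Qed.

Lemma lcoef_mono e c q k : lcoef (lmul [:: (e, c)] q) k = c * lcoef q (k - e).
Proof.
rewrite /lmul /=; elim: q => [|m q IH] /=; first by rewrite mulr0.
rewrite cats0 in IH; rewrite cats0 IH.
have -> : (e + m.1 == k) = (m.1 == k - e).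
  by apply/eqP/eqP => H; [rewrite -H | rewrite H]; ring.
by case: ifP => _; rewrite ?mulrDr.
Qed.

Definition dd (L : nat) (j : int) := lcoef (lpow ldelta L) j.

Lemma ddS L j : dd L.+1 j = - dd L (j - 1) - dd L (j + 1).
Proof.
rewrite /dd /lpow iterS -/(lpow ldelta L).
have -> : lmul ldelta (lpow ldelta L) =
   lmul [:: (1, -1)] (lpow ldelta L) ++ lmul [:: (-1, -1)] (lpow ldelta L).
  by rewrite /lmul /= !cats0.
rewrite lcoef_cat !lcoef_mono !mulN1r; congr (- _ - lcoef _ _); ring.
Qed.

Definition wexp (l : letter) (b : bool) : int :=
  let eps : int := if l.2 then 1 else -1 in if b then eps *+ 2 else eps.

Definition swe (w : seq letter) (st : seq bool) : int := \sum_(lb <- zip w st) wexp lb.1 lb.2.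

Lemma state_weightE w st :
  state_weight w st = [:: (swe w st, (-1) ^+ size (zip w st))].
Proof.
rewrite /state_weight /swe; elim: (zip w st) => [|[l b] zs IH]; first by rewrite big_nil.
rewrite /= IH big_cons /= /lmul /= exprS.
by case: b.
Qed.

Definition J n (bw : seq letter) : laurent :=
  lsum [seq lmul (state_weight bw st) (lpow ldelta (state_loops n bw st).-1)
       | st <- all_states (size bw)].

Lemma jonesE n w : jones n w = J n (braid_word w).
Proof. by []. Qed.

Lemma all_states_size k s : s \in all_states k -> size s = k.
Proof.
elim: k s => [|k IH] s /=; first by rewrite mem_seq1 => /eqP ->.
rewrite cats0 mem_cat => /orP [] /mapP [s' /IH <- ->] //.
Qed.

Lemma sum_all_states_cat m k (F : seq bool -> int) :
  \sum_(s <- all_states (m + k)) F s =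
  \sum_(s1 <- all_states m) \sum_(s2 <- all_states k) F (s1 ++ s2).
Proof.
elim: m F => [|m IH] F; first by rewrite add0n /= big_seq1.
rewrite addSn /= !cats0 !big_cat /= !big_map !IH.
by [].
Qed.

Definition Tm n (w : seq letter) st k : int :=
  (-1) ^+ size w * dd (state_loops n w st).-1 (k - swe w st).

Lemma lcoef_J n w k : lcoef (J n w) k = \sum_(st <- all_states (size w)) Tm n w st k.
Proof.
rewrite /J /lsum lcoef_flatten big_map; rewrite big_seq [RHS]big_seq.
apply: eq_bigr => st /all_states_size Hs.
by rewrite state_weightE lcoef_mono /Tm size_zip Hs minnn.
Qed.

End PartE.
Import PartE.

Module PartF.
Set Implicit Arguments. Unset Strict Implicit. Unset Printing Implicit Defensive.

Definition inr n (w : seq letter) := all (fun l : letter => (0 < l.1 < n)%N) w.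

Lemma inr_nth n w t : inr n w -> (t < size w)%N -> (0 < (nth (0%N, true) w t).1 < n)%N.
Proof. by move=> /all_nthP H Ht; apply: H. Qed.

Lemma nth_skip1 (T : Type) (x0 : T) (P Q : seq T) l t :
  nth x0 (P ++ Q) t = nth x0 (P ++ l :: Q) (if (t < size P)%N then t else t.+1).
Proof.
rewrite !nth_cat; case: ifP => H; first by rewrite H.
have -> : (t.+1 < size P)%N = false by lia.
by rewrite subSn //; lia.
Qed.

Lemma loops_fst n w w' st : map fst w = map fst w' -> state_loops n w st = state_loops n w' st.
Proof.
move=> H; rewrite !state_loopsE.
have Hs : size w = size w' by rewrite -(size_map fst w) H size_map.
have Hp : forall t, (nth (0%N, true) w t).1 = (nth (0%N, true) w' t).1.
  move=> t; case: (ltnP t (size w)) => Ht.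
  - by rewrite -!(nth_map (0%N, true) 0%N fst) ?H // -Hs.
  - by rewrite !nth_default // -Hs.
by rewrite Hs /EL; congr (ncomponents _ (flatten _ ++ _)); apply: eq_map => t; rewrite Hp.
Qed.

Lemma loops_rem1 n P l Q sP sQ :
  size sP = size P -> inr n (P ++ l :: Q) ->
  state_loops n (P ++ l :: Q) (sP ++ false :: sQ) = state_loops n (P ++ Q) (sP ++ sQ).
Proof.
move=> Hs Hr; rewrite !state_loopsE.
have -> : size (P ++ l :: Q) = (size P + size Q).+1 by rewrite size_cat /= addnS.
rewrite size_cat; apply: (@remove_id _ _ (size P)).
- move=> t Ht; apply: inr_nth => //; rewrite size_cat /=; lia.
- lia.
- by rewrite nth_cat Hs ltnn subnn.
- by move=> t Ht; rewrite (nth_skip1 _ _ _ l).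
- by move=> t Ht; rewrite (nth_skip1 _ _ _ false) Hs.
Qed.

Lemma loops_rem2 n P l1 l2 Q sP sQ :
  size sP = size P -> l2.1 = l1.1 -> inr n (P ++ l1 :: l2 :: Q) ->
  state_loops n (P ++ l1 :: l2 :: Q) (sP ++ true :: true :: sQ) =
  (state_loops n (P ++ l1 :: Q) (sP ++ true :: sQ)).+1.
Proof.
move=> Hs Hl Hr; rewrite !state_loopsE.
have -> : size (P ++ l1 :: l2 :: Q) = (size P + size Q).+2 by rewrite size_cat /= !addnS.
have -> : size (P ++ l1 :: Q) = (size P + size Q).+1 by rewrite size_cat /= addnS.
apply: (@remove_EE _ _ (size P)).
- by move=> t Ht; apply: inr_nth => //; rewrite size_cat /= !addnS.
- lia.
- by rewrite nth_cat Hs ltnn subnn.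
- by rewrite nth_cat Hs ltnNge leqnSn /= subSn // subnn.
- by rewrite !nth_cat ltnn ltnNge leqnSn /= subSn // subnn.
- move=> t Ht; rewrite -[P ++ l1 :: Q]cat_rcons -[P ++ l1 :: l2 :: Q]cat_rcons.
  by rewrite (nth_skip1 _ _ _ l2) size_rcons ltnS.
- move=> t Ht; rewrite -[sP ++ true :: sQ]cat_rcons -[sP ++ true :: true :: sQ]cat_rcons.
  by rewrite (nth_skip1 _ _ _ true) size_rcons ltnS Hs.
Qed.

Lemma loops_pos n w st : (0 < n)%N -> inr n w -> (0 < state_loops n w st)%N.
Proof.
move=> Hn Hr; rewrite state_loopsE.
have HE : edges_in ((size w).+1 * n) (EL n (size w) (fun t => (nth (0%N, true) w t).1) (nth false st)).
  by apply: EL_in => t Ht; apply: inr_nth.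
have [Hs _] := inv_lab_ncomp HE.
rewrite /ncomponents; set lab := foldl _ _ _ in Hs *.
case: lab Hs => [|x lab] /=; first by rewrite mulSn; lia.
move=> _; case: ifP => Hx /=; last by [].
have : x \in undup lab by rewrite mem_undup.
by case: (undup lab).
Qed.

End PartF.
Import PartF.

Module PartG.
Set Implicit Arguments. Unset Strict Implicit. Unset Printing Implicit Defensive.
Local Open Scope ring_scope.

Lemma swe_cat P Q sP sQ : size sP = size P -> swe (P ++ Q) (sP ++ sQ) = swe P sP + swe Q sQ.
Proof. by move=> Hs; rewrite /swe zip_cat // big_cat. Qed.

Lemma swe_cons l b Q sQ : swe (l :: Q) (b :: sQ) = wexp l b + swe Q sQ.
Proof. by rewrite /swe /= big_cons. Qed.

Section Expand.
Variables (n : nat) (P Q : seq letter) (i : nat).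
Hypothesis HP : inr n P.
Hypothesis HQ : inr n Q.
Hypothesis Hi : (0 < i < n)%N.

Definition T0 sP sQ k : int := (-1) ^+ (size P + size Q) *
  dd (state_loops n (P ++ Q) (sP ++ sQ)).-1 (k - (swe P sP + swe Q sQ)).
Definition TE sP sQ k : int := (-1) ^+ (size P + size Q) *
  dd (state_loops n (P ++ (i, true) :: Q) (sP ++ true :: sQ)).-1 (k - (swe P sP + swe Q sQ)).

Definition aa k := \sum_(sP <- all_states (size P)) \sum_(sQ <- all_states (size Q)) T0 sP sQ k.
Definition bb k := \sum_(sP <- all_states (size P)) \sum_(sQ <- all_states (size Q)) TE sP sQ k.

Lemma inr_cat n0 w1 w2 : inr n0 (w1 ++ w2) = inr n0 w1 && inr n0 w2.
Proof. by rewrite /inr all_cat. Qed.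

Lemma inr_cons n0 l w : inr n0 (l :: w) = (0 < l.1 < n0)%N && inr n0 w.
Proof. by []. Qed.

Lemma expand0 k : lcoef (J n (P ++ Q)) k = aa k.
Proof.
rewrite lcoef_J size_cat sum_all_states_cat big_seq [RHS]big_seq.
apply: eq_bigr => sP /all_states_size HsP; apply: eq_bigr => sQ _.
by rewrite /Tm /T0 size_cat swe_cat.
Qed.

Lemma expand1 l k x y : l.1 = i -> let eps : int := if l.2 then 1 else -1 in
  x = k - eps -> y = k - eps *+ 2 ->
  lcoef (J n (P ++ l :: Q)) k = - aa x - bb y.
Proof.
move=> Hl eps -> ->.
have Hr : inr n (P ++ l :: Q) by rewrite inr_cat !inr_cons HP HQ Hl Hi.
have Hr' : inr n (P ++ (i, true) :: Q) by rewrite inr_cat !inr_cons HP HQ Hi.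
rewrite lcoef_J size_cat /= -add1n sum_all_states_cat /aa /bb -sumrN -sumrB.
rewrite big_seq [in RHS]big_seq; apply: eq_bigr => sP /all_states_size HsP.
rewrite sum_all_states_cat /= !big_cons big_nil addr0 -sumrN -sumrB; rewrite -big_split /=; apply: eq_bigr => sQ _.
rewrite /Tm /T0 /TE /= size_cat /= addnS exprS !swe_cat // !swe_cons loops_rem1 //.
rewrite (@loops_fst n (P ++ l :: Q) (P ++ (i, true) :: Q)); last by rewrite !map_cat /= Hl.
rewrite /wexp /= -/eps.
have -> : k - (swe P sP + (eps + swe Q sQ)) = k - eps - (swe P sP + swe Q sQ) by ring.
have -> : k - (swe P sP + (eps *+ 2 + swe Q sQ)) = k - eps *+ 2 - (swe P sP + swe Q sQ) by ring.
ring.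
Qed.

Lemma expand2 l k x y z1 z2 : l.1 = i -> let eps : int := if l.2 then 1 else -1 in
  x = k - eps *+ 2 -> y = k - eps *+ 3 -> z1 = k - eps *+ 4 - 1 -> z2 = k - eps *+ 4 + 1 ->
  lcoef (J n (P ++ l :: l :: Q)) k = aa x + bb y *+ 2 - bb z1 - bb z2.
Proof.
move=> Hl eps -> -> -> ->.
have Hr : inr n (P ++ l :: Q) by rewrite inr_cat !inr_cons HP HQ Hl Hi.
have Hr2 : inr n (P ++ l :: l :: Q) by rewrite inr_cat !inr_cons HP HQ Hl Hi.
have Hr' : inr n (P ++ (i, true) :: Q) by rewrite inr_cat !inr_cons HP HQ Hi.
have Hn : (0 < n)%N by case/andP: Hi => _; apply: leq_trans.
rewrite lcoef_J size_cat /= -(add2n (size Q)) sum_all_states_cat /aa /bb.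
rewrite -sumrMnl -big_split -!sumrB.
rewrite big_seq [in RHS]big_seq; apply: eq_bigr => sP /all_states_size HsP.
rewrite sum_all_states_cat /= !big_cons big_nil addr0 -!big_split /=.
rewrite [RHS](_ : _ = \sum_(sQ <- all_states (size Q)) (T0 sP sQ (k - eps *+ 2)
   + TE sP sQ (k - eps *+ 3) *+ 2 - TE sP sQ (k - eps *+ 4 - 1) - TE sP sQ (k - eps *+ 4 + 1))).
  2: by rewrite !sumrB big_split /= sumrMnl.
apply: eq_bigr => sQ _.
rewrite /Tm /T0 /TE /= size_cat /= !addnS !exprS !swe_cat // !swe_cons.
have L0 : state_loops n (P ++ [:: l, l & Q]) (sP ++ [:: false, false & sQ]) =
          state_loops n (P ++ Q) (sP ++ sQ).
  by rewrite loops_rem1 // loops_rem1.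
have LE := @loops_fst n (P ++ l :: Q) (P ++ (i, true) :: Q) (sP ++ true :: sQ)
   ltac:(by rewrite !map_cat /= Hl).
have L1 : state_loops n (P ++ [:: l, l & Q]) (sP ++ [:: false, true & sQ]) =
          state_loops n (P ++ (i, true) :: Q) (sP ++ true :: sQ).
  by rewrite loops_rem1 // LE.
have L2 : state_loops n (P ++ [:: l, l & Q]) (sP ++ [:: true, false & sQ]) =
          state_loops n (P ++ (i, true) :: Q) (sP ++ true :: sQ).
  rewrite -[P ++ l :: l :: Q]cat_rcons -[sP ++ true :: false :: sQ]cat_rcons.
  by rewrite loops_rem1 ?size_rcons ?HsP // ?cat_rcons // LE.
have L3 : state_loops n (P ++ [:: l, l & Q]) (sP ++ [:: true, true & sQ]) =
          (state_loops n (P ++ (i, true) :: Q) (sP ++ true :: sQ)).+1.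
  by rewrite loops_rem2 // LE.
rewrite L0 L1 L2 L3 /=.
set L := state_loops n (P ++ (i, true) :: Q) (sP ++ true :: sQ).
have HL : L = L.-1.+1 by rewrite prednK //; apply: loops_pos.
have -> : dd L = dd L.-1.+1 by rewrite -HL.
rewrite ddS /wexp /= -/eps.
set s := swe P sP + swe Q sQ.
have -> : k - (swe P sP + (eps + (eps + swe Q sQ))) = k - eps *+ 2 - s by rewrite /s; ring.
have -> : k - (swe P sP + (eps + (eps *+ 2 + swe Q sQ))) = k - eps *+ 3 - s by rewrite /s; ring.
have -> : k - (swe P sP + (eps *+ 2 + (eps + swe Q sQ))) = k - eps *+ 3 - s by rewrite /s; ring.
have -> : k - (swe P sP + (eps *+ 2 + (eps *+ 2 + swe Q sQ))) - 1 = k - eps *+ 4 - 1 - s by rewrite /s; ring.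
have -> : k - (swe P sP + (eps *+ 2 + (eps *+ 2 + swe Q sQ))) + 1 = k - eps *+ 4 + 1 - s by rewrite /s; ring.
ring.
Qed.
End Expand.

End PartG.
Import PartG.

Module PartH.
Set Implicit Arguments. Unset Strict Implicit. Unset Printing Implicit Defensive.
Local Open Scope ring_scope.

Lemma inr_nseq n j l : (0 < l.1 < n)%N -> inr n (nseq j l).
Proof. by move=> H; rewrite /inr all_nseq H orbT. Qed.

Lemma inr_bw n w : all (fun p => (0 < p.1 < n)%N) w -> inr n (braid_word w).
Proof.
elim: w => [//|[a z] w IH] /= /andP [Ha Hw].
rewrite /braid_word /= -/(braid_word w) inr_cat IH // andbT.
by case: z => m; rewrite /gen_pow; [exact: (@inr_nseq n m (a, true) Ha) | exact: (@inr_nseq n m.+1 (a, false) Ha)].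
Qed.

Lemma bw_split alpha gamma i f :
  braid_word (alpha ++ (i, f) :: gamma) = braid_word alpha ++ gen_pow i f ++ braid_word gamma.
Proof. by rewrite /braid_word map_cat flatten_cat. Qed.

Lemma gen_pow_neg i j : gen_pow i (- (j%:Z)) = nseq j (i, false).
Proof. by case: j. Qed.

Section Skein.
Variables (n : nat) (alpha gamma : seq (nat * int)) (i : nat).
Hypothesis Ha : all (fun p => (0 < p.1 < n)%N) alpha.
Hypothesis Hg : all (fun p => (0 < p.1 < n)%N) gamma.
Hypothesis Hi : (0 < i < n)%N.

Definition vv (f : int) (k : int) := lcoef (jones n (alpha ++ (i, f) :: gamma)) k.

Let P := braid_word alpha.
Let Q' := braid_word gamma.
Let HP : inr n P. Proof. exact: inr_bw. Qed.
Let HQ' : inr n Q'. Proof. exact: inr_bw. Qed.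

Lemma skein f k : vv (f + 2) k = vv f (k - 4) + vv (f + 1) (k - 3) - vv (f + 1) (k - 1).
Proof.
rewrite /vv !jonesE !bw_split -/P -/Q'.
case: f => [m|[|j]].
- have -> : Posz m + 2 = Posz m.+2 by rewrite -PoszD addn2.
  have -> : Posz m + 1 = Posz m.+1 by rewrite -PoszD addn1.
  have HQ : inr n (nseq m (i, true) ++ Q') by rewrite inr_cat HQ' andbT; exact: (@inr_nseq n m (i, true) Hi).
  rewrite /= ?cat_cons.
  rewrite (@expand2 n P _ i HP HQ Hi (i, true) k (k - 2) (k - 3) (k - 5) (k - 3)) //=; try ring.
  rewrite (@expand1 n P _ i HP HQ Hi (i, true) (k - 3) (k - 4) (k - 5)) //=; try ring.
  rewrite (@expand1 n P _ i HP HQ Hi (i, true) (k - 1) (k - 2) (k - 3)) //=; try ring.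
  rewrite !expand0. ring.
- have -> : Negz 0 + 2 = 1 by [].
  have -> : Negz 0 + 1 = 0 by [].
  rewrite /=.
  rewrite (@expand1 n P Q' i HP HQ' Hi (i, true) k (k - 1) (k - 2)) //=; try ring.
  rewrite (@expand1 n P Q' i HP HQ' Hi (i, false) (k - 4) (k - 3) (k - 2)) //=; try ring.
  rewrite !expand0. ring.
- have -> : Negz j.+1 + 2 = - (j%:Z) by rewrite NegzE; lia.
  have -> : Negz j.+1 + 1 = - (j.+1%:Z) by rewrite NegzE; lia.
  have -> : Negz j.+1 = - (j.+2%:Z) by rewrite NegzE.
  rewrite !gen_pow_neg.
  have HQ : inr n (nseq j (i, false) ++ Q') by rewrite inr_cat HQ' andbT; exact: (@inr_nseq n j (i, false) Hi).
  rewrite /= ?cat_cons.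
  rewrite (@expand2 n P _ i HP HQ Hi (i, false) (k - 4) (k - 2) (k - 1) (k - 1) (k + 1)) //=; try ring.
  rewrite (@expand1 n P _ i HP HQ Hi (i, false) (k - 3) (k - 2) (k - 1)) //=; try ring.
  rewrite (@expand1 n P _ i HP HQ Hi (i, false) (k - 1) k (k + 1)) //=; try ring.
  rewrite !expand0. ring.
Qed.
End Skein.

End PartH.
Import PartH.

Module PartI.
Set Implicit Arguments. Unset Strict Implicit. Unset Printing Implicit Defensive.
Local Open Scope ring_scope.

Definition w7 : 'F_7 := 2%:R.
Lemma w7_3 : w7 ^+ 3 = 1. Proof. by apply/eqP. Qed.
Lemma w7_sum : 1 + w7 + w7 ^+ 2 = 0. Proof. by apply/eqP. Qed.
Lemma w7_nz : w7 != 0. Proof. by []. Qed.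
Lemma w7_unit : w7 \is a GRing.unit. Proof. by rewrite unitfE w7_nz. Qed.
Lemma w7_inv : w7 ^-1 = w7 ^+ 2.
Proof.
have H : w7 * w7 ^+ 2 = 1 by rewrite -exprS w7_3.
by rewrite -[w7^-1]mulr1 -H mulKf ?w7_nz.
Qed.

Definition ev (p : laurent) : 'F_7 := \sum_(m <- p) (m.2)%:~R * w7 ^ m.1.

Lemma ev_cat p q : ev (p ++ q) = ev p + ev q.
Proof. by rewrite /ev big_cat. Qed.

Lemma ev_flatten ps : ev (flatten ps) = \sum_(p <- ps) ev p.
Proof. elim: ps => [|p ps IH]; first by rewrite big_nil /ev big_nil. by rewrite big_cons -IH -ev_cat. Qed.

Lemma ev_lmul p q : ev (lmul p q) = ev p * ev q.
Proof.
rewrite /ev /lmul big_allpairs_dep mulr_suml; apply: eq_bigr => a _.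
rewrite mulr_sumr; apply: eq_bigr => b _ /=.
rewrite intrM expfzDr ?w7_nz //; ring.
Qed.

Lemma ev_lone : ev lone = 1.
Proof. by rewrite /ev big_seq1 /= mul1r expr0z. Qed.

Lemma w7_eq : - w7 - w7 ^+ 2 = 1.
Proof.
have E : - w7 - w7 ^+ 2 = 1 - (1 + w7 + w7 ^+ 2) by ring.
by rewrite E w7_sum subr0.
Qed.

Lemma ev_delta : ev ldelta = 1.
Proof.
rewrite /ev /ldelta !big_cons big_nil addr0 /= expr1z.
have -> : w7 ^ (-1) = w7 ^+ 2 by rewrite -invr_expz expr1z w7_inv.
by rewrite !mulN1r w7_eq.
Qed.

Lemma ev_lpow L : ev (lpow ldelta L) = 1.
Proof. elim: L => [|L IH]; first exact: ev_lone. by rewrite /lpow iterS ev_lmul ev_delta IH mul1r. Qed.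

Lemma ev_lw l : ev (letter_weight l false) + ev (letter_weight l true) = 1.
Proof.
rewrite /ev /letter_weight !big_seq1 /= !mulN1r.
have H := w7_sum.
case: l.2 => /=.
- rewrite expr1z.
  have -> : w7 ^ (1 *+ 2) = w7 ^+ 2 by [].
  exact: w7_eq.
- have -> : w7 ^ (-1) = w7 ^+ 2 by rewrite -invr_expz expr1z w7_inv.
  have -> : w7 ^ ((-1) *+ 2) = w7.
    have -> : ((-1) *+ 2 : int) = - 2%:Z by [].
    rewrite -invr_expz.
    have -> : w7 ^ (2%:Z) = w7 ^+ 2 by [].
    by rewrite -exprVn w7_inv -exprM (_ : (2 * 2 = 3 + 1)%N) // exprD w7_3 mul1r expr1.
  by rewrite addrC w7_eq.
Qed.

Lemma ev_sw_sum (bw : seq letter) :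
  \sum_(st <- all_states (size bw)) ev (state_weight bw st) = 1.
Proof.
elim: bw => [|l bw IH] /=; first by rewrite big_seq1 /state_weight /= ev_lone.
rewrite cats0 big_cat /= !big_map.
rewrite /state_weight /=.
under eq_bigr do rewrite ev_lmul.
under [X in _ + X]eq_bigr do rewrite ev_lmul.
rewrite -!mulr_sumr -mulrDl ev_lw mul1r.
exact: IH.
Qed.

Lemma ev_jones n w : ev (jones n w) = 1.
Proof.
rewrite jonesE /J /lsum ev_flatten big_map.
under eq_bigr do rewrite ev_lmul ev_lpow mulr1.
exact: ev_sw_sum.
Qed.

Lemma lcoef_cons m p k : lcoef (m :: p) k = (if m.1 == k then m.2 else 0) + lcoef p k.
Proof. by rewrite /=; case: ifP; rewrite ?add0r. Qed.

Lemma ev_coef p S : uniq S -> {subset map fst p <= S} ->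
  ev p = \sum_(k <- S) (lcoef p k)%:~R * w7 ^ k.
Proof.
move=> US; elim: p => [|m p IH] Hs.
- by rewrite /ev big_nil big1 // => k _; rewrite /= mul0r.
- rewrite /ev big_cons -/(ev p) IH; last by move=> k Hk; apply: Hs; rewrite /= in_cons Hk orbT.
  under [RHS]eq_bigr do rewrite lcoef_cons intrD mulrDl.
  rewrite big_split /=; congr (_ + _).
  have Hm : m.1 \in S by apply: Hs; rewrite /= in_cons eqxx.
  rewrite (big_rem _ Hm) /= eqxx big1_seq ?addr0 //.
  move=> k /andP [_ Hk]; case: eqP => [E|]; last by rewrite mul0r.
  by move: Hk; rewrite -E mem_rem_uniqF.
Qed.

Lemma lsupport_nonempty p : ev p != 0 -> lsupport p != [::].
Proof.
move=> H; apply/negP => /eqP Hl; move/negP: H; apply.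
rewrite (@ev_coef p (undup (map fst p))) ?undup_uniq //; last by move=> k; rewrite mem_undup.
rewrite big1_seq // => k /andP [_ Hk].
have : lcoef p k == 0.
  apply/negPn/negP => Hnz.
  have : k \in lsupport p by rewrite /lsupport mem_filter Hnz Hk.
  by rewrite Hl.
by move/eqP ->; rewrite mul0r.
Qed.

Lemma jones_nonzero n w : lsupport (jones n w) != [::].
Proof. by apply: lsupport_nonempty; rewrite ev_jones oner_neq0. Qed.

End PartI.
Import PartI.

Module PartJ.
Set Implicit Arguments. Unset Strict Implicit. Unset Printing Implicit Defensive.
Local Open Scope ring_scope.

Lemma lcoef_notin p k : k \notin map fst p -> lcoef p k = 0.
Proof.
elim: p => [//|m p IH] /=; rewrite in_cons negb_or => /andP [H1 H2].
by rewrite eq_sym (negbTE H1) IH.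
Qed.

Lemma lcoef_nz_mem p k : lcoef p k != 0 -> k \in lsupport p.
Proof.
move=> H; rewrite /lsupport mem_filter H mem_undup /=.
by apply/negPn/negP => /lcoef_notin E; rewrite E eqxx in H.
Qed.

Lemma foldr_max_mem (k : int) ks : foldr Num.max k ks \in k :: ks.
Proof.
elim: ks => [|x ks IH] /=; first by rewrite mem_seq1.
rewrite /Num.max; case: ifP => _; rewrite !in_cons ?eqxx ?orbT //.
by move: IH; rewrite in_cons => /orP [->|->]; rewrite ?orbT.
Qed.

Lemma foldr_max_ge (k : int) ks x : x \in k :: ks -> x <= foldr Num.max k ks.
Proof.
elim: ks x => [|y ks IH] x /=; first by rewrite mem_seq1 => /eqP ->.
rewrite !in_cons => /orP [/eqP ->|/orP [/eqP ->|Hx]].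
- by apply: le_trans (IH k _) _; rewrite ?in_cons ?eqxx // le_max lexx orbT.
- by rewrite le_max lexx.
- by apply: le_trans (IH x _) _; rewrite ?in_cons ?Hx ?orbT // le_max lexx orbT.
Qed.

Lemma ldeg_ge p k : lcoef p k != 0 -> k <= ldeg p.
Proof.
move=> /lcoef_nz_mem; rewrite /ldeg; case: (lsupport p) => [//|x ks].
exact: foldr_max_ge.
Qed.

Lemma ldeg_lcoef p : lsupport p != [::] -> lcoef p (ldeg p) != 0.
Proof.
rewrite /ldeg; have : forall k, k \in lsupport p -> lcoef p k != 0.
  by move=> k; rewrite /lsupport mem_filter => /andP [].
case: (lsupport p) => [//|x ks] H _; apply: H; exact: foldr_max_mem.
Qed.

Lemma lcoef_gt p k : ldeg p < k -> lcoef p k = 0.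
Proof.
move=> H; apply/eqP; apply/negPn/negP => /ldeg_ge Hk.
by move: (lt_le_trans H Hk); rewrite ltxx.
Qed.

Lemma ldeg_char p d : lcoef p d != 0 -> (forall k, d < k -> lcoef p k = 0) -> ldeg p = d.
Proof.
move=> Hd Hk; have H1 := ldeg_ge Hd.
have Hs : lsupport p != [::] by apply/eqP => E; have := lcoef_nz_mem Hd; rewrite E.
have H2 := ldeg_lcoef Hs.
apply/eqP; rewrite eq_le H1 andbT; rewrite leNgt; apply/negP => /Hk E.
by rewrite E eqxx in H2.
Qed.

Section Step.
Variables p q r : laurent.
Hypothesis Hr : forall k, lcoef r k = lcoef p (k - 4) + lcoef q (k - 3) - lcoef q (k - 1).

Lemma stepA : lsupport p != [::] -> ldeg q <= ldeg p ->
  ldeg r = ldeg p + 4 /\ llead r = llead p.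
Proof.
move=> Hp Hqp.
have Hd : lcoef r (ldeg p + 4) = llead p.
  rewrite Hr (@lcoef_gt q (ldeg p + 4 - 3)) ?(@lcoef_gt q (ldeg p + 4 - 1)); try lia.
  by rewrite /llead addr0 subr0 addrK.
have E : ldeg r = ldeg p + 4.
  apply: ldeg_char; first by rewrite Hd; exact: ldeg_lcoef.
  move=> k Hk; rewrite Hr !lcoef_gt ?addr0 ?subr0 //; lia.
by split => //; rewrite /llead E Hd.
Qed.

Lemma stepB : lsupport q != [::] -> ldeg p + 1 < ldeg q ->
  ldeg r = ldeg q + 3 /\ llead r = llead q.
Proof.
move=> Hq Hpq.
have Hd : lcoef r (ldeg q + 3) = llead q.
  rewrite Hr (@lcoef_gt p (ldeg q + 3 - 4)) ?(@lcoef_gt q (ldeg q + 3 - 1)); try lia.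
  by rewrite /llead add0r subr0; congr (lcoef q _); ring.
have E : ldeg r = ldeg q + 3.
  apply: ldeg_char; first by rewrite Hd; exact: ldeg_lcoef.
  move=> k Hk; rewrite Hr !lcoef_gt ?addr0 ?subr0 //; lia.
by split => //; rewrite /llead E Hd.
Qed.
End Step.

End PartJ.
Import PartJ.

Unset Implicit Arguments.
Local Open Scope ring_scope.

Theorem proposition3p3 (n : nat) (alpha gamma : seq (nat * int)) (i : nat) (e : int) :
  all (fun p => (0 < p.1 < n)%N) alpha ->
  all (fun p => (0 < p.1 < n)%N) gamma ->
  (0 < i < n)%N ->
  ldeg (jones n (alpha ++ (i, e + 1) :: gamma)) <= ldeg (jones n (alpha ++ (i, e) :: gamma)) ->
  (forall m : nat, (1 <= m)%N ->
     1 + ldeg (jones n (alpha ++ (i, e + m%:Z) :: gamma))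
       < ldeg (jones n (alpha ++ (i, e + m%:Z + 1) :: gamma))) /\
  (forall m : nat, (2 <= m)%N ->
     ldeg (jones n (alpha ++ (i, e + m%:Z) :: gamma))
       = ldeg (jones n (alpha ++ (i, e) :: gamma)) + 3 * m%:Z - 2 /\
     llead (jones n (alpha ++ (i, e + m%:Z) :: gamma))
       = llead (jones n (alpha ++ (i, e) :: gamma))).
Proof.
move=> Ha Hg Hi H0.
pose V f := jones n (alpha ++ (i, f) :: gamma).
have Hsk : forall f k, lcoef (V (f + 2)) k =
    lcoef (V f) (k - 4) + lcoef (V (f + 1)) (k - 3) - lcoef (V (f + 1)) (k - 1).
  by move=> f k; exact: (skein Ha Hg Hi).
have Hsk' : forall (m : nat) k, lcoef (V (e + m.+2%:Z)) k =
    lcoef (V (e + m%:Z)) (k - 4) + lcoef (V (e + m.+1%:Z)) (k - 3) - lcoef (V (e + m.+1%:Z)) (k - 1).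
  move=> m k; have := Hsk (e + m%:Z) k.
  have -> : e + m%:Z + 2 = e + m.+2%:Z by lia.
  by have -> : e + m%:Z + 1 = e + m.+1%:Z by lia.
have Q : forall m : nat, (1 <= m)%N ->
   [/\ 1 + ldeg (V (e + m%:Z)) < ldeg (V (e + m.+1%:Z)),
       ldeg (V (e + m.+1%:Z)) = ldeg (V e) + 3 * m.+1%:Z - 2 &
       llead (V (e + m.+1%:Z)) = llead (V e)].
  elim=> [//|m IH] _.
  case: m IH => [|m] IH.
  - have [D2 L2] := @stepA (V e) (V (e + 1)) (V (e + 2%:Z))
       ltac:(move=> k; have := Hsk' 0%N k; by rewrite addr0)
       (jones_nonzero n _) H0.
    split.
    + have H0' : ldeg (V (e + 1%:Z)) <= ldeg (V e) := H0. by rewrite D2; lia.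
    + by rewrite D2; lia.
    + exact: L2.
  - have [IH1 IH2 IH3] := IH isT.
    have [D L] := @stepB (V (e + m.+1%:Z)) (V (e + m.+2%:Z)) (V (e + m.+3%:Z))
       (Hsk' m.+1) (jones_nonzero n _) ltac:(by rewrite addrC).
    split.
    + by rewrite D; lia.
    + by rewrite D IH2; lia.
    + by rewrite L IH3.
split.
- move=> m Hm; have [Q1 _ _] := Q m Hm.
  by have -> : e + m%:Z + 1 = e + m.+1%:Z by lia.
- case=> [//|m] Hm; have [_ Q2 Q3] := Q m ltac:(lia).
  by split.
Qed.
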